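(* Let $F:\mathcal{X}\to\mathcal{X}$ be such that the Koopman operator $\mathcal{K}$ on $\mathcal{H}$ is densely defined, and let $\mathfrak{K}_1,\mathfrak{K}_2,\dots$ be a countable family of kernel functions (i.e. $\mathfrak{K}_j=\mathfrak{K}_{x_j}$ for some $x_j\in\mathcal{X}$) whose linear span is a core of $\mathcal{K}^*$. Let $V_N=\mathrm{span}\{\mathfrak{K}_1,\dots,\mathfrak{K}_N\}$, let $\mathcal{P}_N:\mathcal{H}\to V_N$ be the orthogonal projection and $\mathcal{P}_N^*:V_N\to\mathcal{H}$ the inclusion, so that $$\sigma_{\inf}((\mathcal{K}^*-zI)\mathcal{P}_N^* )=\inf_{0\neq g\in V_N}\frac{\|(\mathcal{K}^*-zI)g\|}{\|g\|}.$$ Then for each $z\in\mathbb{C}$ the quantity $\sigma_{\inf}((\mathcal{K}^*-zI)\mathcal{P}_N^* )$ is non-increasing in $N$, and as $N\to\infty$ the functions $z\mapsto\sigma_{\inf}((\mathcal{K}^*-zI)\mathcal{P}_N^* )$ converge to $z\mapsto\sigma_{\inf}(\mathcal{K}^*-zI)$ uniformly on compact subsets of $\mathbb{C}$.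
   Context: $\mathcal{H}$ is a reproducing kernel Hilbert space (RKHS) of complex-valued functions on a set $\mathcal{X}$ with reproducing kernel $\mathfrak{K}:\mathcal{X}\times\mathcal{X}\to\mathbb{C}$, inner product $\langle\cdot,\cdot\rangle$ (linear in the first argument) and norm $\|\cdot\|$; $\mathfrak{K}_x\in\mathcal{H}$ denotes the kernel function at $x$, so $g(x)=\langle g,\mathfrak{K}_x\rangle$ for all $g\in\mathcal{H}$ and $\mathfrak{K}(x,y)=\langle\mathfrak{K}_x,\mathfrak{K}_y\rangle$. For $F:\mathcal{X}\to\mathcal{X}$ the Koopman operator $\mathcal{K}=\mathcal{K}_F$ on $\mathcal{H}$ is $\mathcal{K}g=g\circ F$ with domain $\{g\in\mathcal{H}:g\circ F\in\mathcal{H}\}$; it is closed. When it is densely defined, its adjoint $\mathcal{K}^*$ (Perron–Frobenius operator) is closed and densely defined, and $\mathfrak{K}_x\in\mathcal{D}(\mathcal{K}^* )$ with $\mathcal{K}^*\mathfrak{K}_x=\mathfrak{K}_{F(x)}$. For an operator $T$ with domain $\mathcal{D}(T)$, the injection modulus is $\sigma_{\inf}(T)=\inf\{\|Tg\|/\|g\|:0\neq g\in\mathcal{D}(T)\}$. A core of a closed operator $T$ is a subspace of $\mathcal{D}(T)$ on which the restriction of $T$ has closure $T$. *)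

(* Defs.v *)
From HB Require Import structures.
From mathcomp Require Import all_boot all_order all_algebra.
From mathcomp Require Import all_classical all_reals all_analysis.
From mathcomp Require Export complex.
Import Order.TTheory GRing.Theory Num.Theory.
Import numFieldTopology.Exports numFieldNormedType.Exports.

Set Implicit Arguments.
Unset Strict Implicit.
Unset Printing Implicit Defensive.

Local Open Scope classical_set_scope.
Local Open Scope ring_scope.

(* The usual metric topology on C = R[i] (balls for the modulus), so that
   `compact` makes sense for subsets of C. *)
HB.instance Definition _ (R : rcfType) := PseudoPointedMetric.copy R[i] (R[i])^o.

Section RKHS.
Context {R : realType} {X : Type}.

Local Notation C := R[i].
Local Notation fn := (X -> C).

Definition fzero : fn := fun _ => 0.
Definition fsub (f g : fn) : fn := fun y => f y - g y.
Definition fscale (a : C) (f : fn) : fn := fun y => a * f y.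

Definition hnorm (ip : fn -> fn -> C) (f : fn) : R := Num.sqrt (complex.Re (ip f f)).

(* H (a set of functions X -> C) with inner product ip (linear in the first
   argument) is a Hilbert space, and it is a RKHS whose kernel function at x
   is kf x, i.e. kf x \in H and g x = <g, kf x> for all g in H.
   (The kernel is K(x,y) = <kf x, kf y> = kf x y.) *)
Definition is_RKHS (H : set fn) (ip : fn -> fn -> C) (kf : X -> fn) : Prop :=
      H fzero /\
      (forall f g, H f -> H g -> H (fun y => f y + g y)) /\
      (forall a f, H f -> H (fscale a f)) /\
      (forall a f g h, H f -> H g -> H h ->
         ip (fun y => a * f y + g y) h = a * ip f h + ip g h) /\
      (forall f g, H f -> H g -> ip f g = (ip g f)^*) /\
      (forall f, H f -> 0 <= ip f f) /\ (forall f, H f -> ip f f = 0 -> f = fzero) /\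
      (forall u : nat -> fn, (forall n, H (u n)) ->
         (forall e : R, 0 < e -> exists N, forall m n, (N <= m)%N -> (N <= n)%N ->
            hnorm ip (fsub (u m) (u n)) < e) ->
         exists g, H g /\ (fun n => hnorm ip (fsub (u n) g)) @ \oo --> (0 : R)) /\
      (forall x, H (kf x)) /\
      (forall g x, H g -> g x = ip g (kf x)).

Definition koopman_dom (H : set fn) (F : X -> X) (g : fn) : Prop :=
  H g /\ H (g \o F).

Definition densely_defined (H : set fn) (ip : fn -> fn -> C) (F : X -> X) : Prop :=
  forall h, H h -> forall e : R, 0 < e ->
    exists g, koopman_dom H F g /\ hnorm ip (fsub g h) < e.

(* Graph of the adjoint K^* (Perron--Frobenius operator):
   h \in D(K^* ) and K^* h = w iff <K g, h> = <g, w> for all g \in D(K). *)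
Definition adj_graph (H : set fn) (ip : fn -> fn -> C) (F : X -> X)
    (h w : fn) : Prop :=
  [/\ H h, H w & forall g, koopman_dom H F g -> ip (g \o F) h = ip g w].

(* S is a core of the closed operator with graph T (on the Hilbert space H):
   S is contained in the domain and the closure of the graph of the
   restriction of T to S is the graph of T. *)
Definition is_core (H : set fn) (ip : fn -> fn -> C) (T : fn -> fn -> Prop)
    (S : set fn) : Prop :=
  (forall s, S s -> exists w, T s w) /\
  (forall h w, T h w <->
     (H h /\ H w /\
      exists s v : nat -> fn, (forall n, S (s n) /\ T (s n) (v n)) /\
        (fun n => hnorm ip (fsub (s n) h)) @ \oo --> (0 : R) /\
        (fun n => hnorm ip (fsub (v n) w)) @ \oo --> (0 : R))).

(* V_N = span {kf (x 0), ..., kf (x (N-1))} *)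
Definition kspan (kf : X -> fn) (x : nat -> X) (N : nat) (g : fn) : Prop :=
  exists c : nat -> C, g = fun y => \sum_(j < N) c j * kf (x j) y.

Definition kspan_all (kf : X -> fn) (x : nat -> X) (g : fn) : Prop :=
  exists N, kspan kf x N g.

(* injection modulus of (K^* - z I) restricted to the subspace D of its
   domain: inf { ||(K^* - z) g|| / ||g|| : 0 <> g \in D \cap D(K^* ) },
   as an extended real (inf of the empty set is +oo). *)
Definition sigma_inf_on (H : set fn) (ip : fn -> fn -> C) (F : X -> X)
    (D : set fn) (z : C) : \bar R :=
  ereal_inf [set r | exists g w, [/\ D g, g <> fzero, adj_graph H ip F g w &
     r = (hnorm ip (fsub w (fscale z g)) / hnorm ip g)%:E]].

End RKHS.

(* Main.v *)
Require Import Defs.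
From HB Require Import structures.
From mathcomp Require Import all_boot all_order all_algebra.
From mathcomp Require Import all_classical all_reals all_analysis.
From mathcomp Require Import complex.
Import Order.TTheory GRing.Theory Num.Theory.
Import numFieldTopology.Exports numFieldNormedType.Exports.
Local Open Scope classical_set_scope.
Local Open Scope ring_scope.
Local Open Scope complex_scope.
From mathcomp Require Import ring lra.
Set Implicit Arguments.
Unset Strict Implicit.

Definition cn {R : realType} (c : R[i]) : R := Num.sqrt (complex.Re c ^+2 + complex.Im c ^+2).

Lemma cnN (R : realType) (a : R[i]) : cn (- a) = cn a.
Proof. by rewrite /cn; case: a => a1 a2 /=; rewrite !sqrrN. Qed.
Lemma cn_ge0 (R : realType) (a : R[i]) : 0 <= cn a.
Proof. exact: sqrtr_ge0. Qed.

Lemma near_cn (R : realType) (z : R[i]) (d : R) : 0 < d -> \forall w \near z, cn (z - w) < d.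
Proof.
move=> d0.
have := (@cvgrPdist_lt _ (R[i]^o) _ (nbhs z) _ id z).1 (@cvg_id _ (nbhs z)) d%:C.
rewrite ltcR => /(_ _ d0). apply: filterS => w. rewrite normc_def ltcR //.
Qed.

Section S.
Variables (R : realType) (X : Type) (H : set (X -> R[i]))
  (ip : (X -> R[i]) -> (X -> R[i]) -> R[i]) (kf : X -> X -> R[i]).
Hypothesis hR : is_RKHS H ip kf.
Local Notation fn := (X -> R[i]).
Local Notation nrm := (hnorm ip).
Definition B (f g : fn) : R := complex.Re (ip f g).

Lemma ReD (u v : R[i]) : complex.Re (u + v) = complex.Re u + complex.Re v.
Proof. by case: u; case: v. Qed.
Lemma ReRM (t : R) (u : R[i]) : complex.Re (t%:C * u) = t * complex.Re u.
Proof. by case: u => a b /=; rewrite mul0r subr0. Qed.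
Lemma ReJ (u : R[i]) : complex.Re (u^*) = complex.Re u.
Proof. by case: u. Qed.

Lemma H0 : H fzero. Proof. by case: hR. Qed.
Lemma Hcomb (a : R[i]) (f g c : fn) : H f -> H g -> (forall y, c y = a * f y + g y) -> H c.
Proof.
case: hR => _ [hadd [hsc _]] hf hg hc.
have -> : c = fun y => fscale a f y + g y by apply/funext => y; rewrite hc.
by apply: hadd => //; apply: hsc.
Qed.
Lemma linE (a : R[i]) (f g h c : fn) : H f -> H g -> H h -> (forall y, c y = a * f y + g y) ->
  ip c h = a * ip f h + ip g h.
Proof.
case: hR => _ [_ [_ [hl _]]] hf hg hh hc.
have -> : c = fun y => a * f y + g y by apply/funext => y; rewrite hc.
exact: hl.
Qed.
Lemma ipJ f g : H f -> H g -> ip f g = (ip g f)^*.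
Proof. by case: hR => _ [_ [_ [_ [hj _]]]]; apply: hj. Qed.
Lemma ip_ge0 f : H f -> 0 <= ip f f.
Proof. by case: hR => _ [_ [_ [_ [_ [hp _]]]]]; apply: hp. Qed.
Lemma ip_def f : H f -> ip f f = 0 -> f = fzero.
Proof. by case: hR => _ [_ [_ [_ [_ [_ [hd _]]]]]]; apply: hd. Qed.

Lemma ip0 h : H h -> ip fzero h = 0.
Proof.
move=> hh; have := @linE 1 fzero fzero h fzero H0 H0 hh.
rewrite mul1r => /(_ (fun y => esym (etrans (f_equal (fun u => u + 0) (mul1r 0)) (addr0 0)))).
by move=> e; apply: (@addrI _ (ip fzero h)); rewrite -e addr0.
Qed.

Lemma B_ge0 f : H f -> 0 <= B f f.
Proof. by move=> /ip_ge0; rewrite lecE => /andP[_]. Qed.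

Lemma ipR f : H f -> ip f f = (B f f)%:C.
Proof.
move=> hf; have := ip_ge0 hf; move/ger0_Im => him.
by rewrite /B; case: (ip f f) him => a b /= ->.
Qed.

Lemma B_def f : H f -> B f f = 0 -> f = fzero.
Proof. by move=> hf e; apply: ip_def => //; rewrite ipR // e. Qed.

Lemma Bsym f g : H f -> H g -> B f g = B g f.
Proof. by move=> hf hg; rewrite /B ipJ // ReJ. Qed.

Lemma nrm2 f : H f -> nrm f ^+ 2 = B f f.
Proof. by move=> hf; rewrite /hnorm sqr_sqrtr // B_ge0. Qed.
Lemma nrm_ge0 f : 0 <= nrm f.
Proof. exact: sqrtr_ge0. Qed.

Lemma Bexp (t : R) f g c : H f -> H g -> (forall y, c y = f y + t%:C * g y) ->
  B c c = B f f + 2 * t * B f g + t ^+ 2 * B g g.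
Proof.
move=> hf hg hc.
have hc' : forall y, c y = t%:C * g y + f y by move=> y; rewrite hc addrC.
have Hc : H c := Hcomb hg hf hc'.
rewrite /B (linE hg hf Hc hc') ReD ReRM.
rewrite (ipJ hg Hc) (ipJ hf Hc) !ReJ.
rewrite (linE hg hf hg hc') (linE hg hf hf hc') !ReD !ReRM.
rewrite -/(B g g) -/(B f g) -/(B g f) -/(B f f) (Bsym hg hf).
by rewrite /GRing.exp /=; ring.
Qed.

Lemma B0l g : H g -> B fzero g = 0.
Proof. by move=> hg; rewrite /B ip0. Qed.

Lemma nrm0_eq f : H f -> nrm f = 0 -> f = fzero.
Proof. by move=> hf e; apply: B_def => //; rewrite -nrm2 // e expr0n. Qed.

Lemma CS f g : H f -> H g -> B f g <= nrm f * nrm g.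
Proof.
move=> hf hg.
have [a0|a0] := eqVneq (nrm f) 0.
  by rewrite (nrm0_eq hf a0) B0l //; apply: mulr_ge0; apply: nrm_ge0.
have [b0|b0] := eqVneq (nrm g) 0.
  by rewrite (nrm0_eq hg b0) (Bsym hf H0) B0l //; apply: mulr_ge0; apply: nrm_ge0.
have ap : 0 < nrm f by rewrite lt_neqAle eq_sym a0 nrm_ge0.
have bp : 0 < nrm g by rewrite lt_neqAle eq_sym b0 nrm_ge0.
pose t := - (nrm f / nrm g).
pose c := fun y => f y + t%:C * g y.
have hc : forall y, c y = f y + t%:C * g y by [].
have Hc : H c.
  by apply: (@Hcomb t%:C g f) => // y; rewrite hc addrC.
have := B_ge0 Hc; rewrite (Bexp hf hg hc) -!nrm2 //.
have -> : nrm f ^+ 2 + 2 * t * B f g + t ^+ 2 * nrm g ^+ 2 =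
   (2 * nrm f / nrm g) * (nrm f * nrm g - B f g).
  by rewrite /t; field; rewrite b0.
rewrite pmulr_rge0 ?subr_ge0 //.
by rewrite divr_gt0 // mulr_gt0.
Qed.

Lemma nrm_tri f g c : H f -> H g -> (forall y, c y = f y + g y) -> nrm c <= nrm f + nrm g.
Proof.
move=> hf hg hc.
have hc' : forall y, c y = f y + 1%:C * g y by move=> y; rewrite hc mul1r.
have Hc : H c by apply: (@Hcomb 1 g f) => // y; rewrite hc addrC mul1r.
rewrite -(@ler_pXn2r _ 2) // ?nnegrE ?addr_ge0 ?nrm_ge0 //.
rewrite nrm2 // (Bexp hf hg hc') sqrrD !nrm2 //.
have := CS hf hg; rewrite expr1n !mul1r mulr1 => h.
by rewrite -mulr_natl; lra.
Qed.

Lemma nrm_scale a f c : H f -> (forall y, c y = a * f y) -> nrm c = cn a * nrm f.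
Proof.
move=> hf hc.
have hc' : forall y, c y = a * f y + fzero y by move=> y; rewrite hc /fzero addr0.
have Hc : H c := Hcomb hf H0 hc'.
rewrite /hnorm /cn -sqrtrM ?addr_ge0 ?sqr_ge0 //; congr Num.sqrt.
rewrite (linE hf H0 Hc hc') ip0 // addr0 (ipJ hf Hc) (linE hf H0 hf hc') ip0 // addr0.
rewrite ipR // -/(B f f); case: a {hc hc'} => a1 a2 /=.
by rewrite /GRing.exp /=; ring.
Qed.

Lemma Hsub f g : H f -> H g -> H (fsub f g).
Proof. by move=> hf hg; apply: (@Hcomb (-1) g f) => // y; rewrite /fsub mulN1r addrC. Qed.
Lemma Hscale a f : H f -> H (fscale a f).
Proof. by move=> hf; apply: (@Hcomb a f fzero) => //; [exact: H0| move=> y; rewrite /fzero addr0]. Qed.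

Lemma cn1 : cn (1 : R[i]) = 1.
Proof. by rewrite /cn /= expr0n expr1n addr0 sqrtr1. Qed.

Lemma nrm_fsubC f g : H f -> H g -> nrm (fsub f g) = nrm (fsub g f).
Proof.
move=> hf hg; rewrite (@nrm_scale (-1) (fsub g f)) ?cnN ?cn1 ?mul1r //; first exact: Hsub.
by move=> y; rewrite /fsub mulN1r opprB.
Qed.

Lemma nrm_diff f g : H f -> H g -> `|nrm f - nrm g| <= nrm (fsub f g).
Proof.
move=> hf hg; rewrite ler_norml; apply/andP; split.
  have := @nrm_tri (fsub g f) f g (Hsub hg hf) hf (fun y => esym (subrK (f y) (g y))).
  rewrite nrm_fsubC //; lra.
have := @nrm_tri (fsub f g) g f (Hsub hf hg) hg (fun y => esym (subrK (g y) (f y))).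
lra.
Qed.

Lemma nrm_pos g : H g -> g <> fzero -> 0 < nrm g.
Proof.
move=> hg gn; rewrite lt_neqAle nrm_ge0 andbT eq_sym; apply/eqP => e.
by apply: gn; apply: nrm0_eq.
Qed.

Lemma ratio_lip g w z z' : H g -> H w -> 0 < nrm g ->
  nrm (fsub w (fscale z g)) / nrm g <= nrm (fsub w (fscale z' g)) / nrm g + cn (z - z').
Proof.
move=> hg hw gp.
have e : forall y, fsub w (fscale z g) y = fsub w (fscale z' g) y + fscale (z' - z) g y.
  by move=> y; rewrite /fsub /fscale mulrBl addrA subrK.
have h1 := @nrm_tri (fsub w (fscale z' g)) (fscale (z' - z) g) (fsub w (fscale z g))
  (Hsub hw (Hscale z' hg)) (Hscale _ hg) e.
rewrite (@nrm_scale (z' - z) g (fscale (z' - z) g)) // -opprB cnN in h1.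
by rewrite ler_pdivrMr // mulrDl divfK ?gt_eqF.
Qed.

Variables (F : X -> X) (x : nat -> X).
Local Notation sig := (sigma_inf_on H ip F).

Lemma sig_lip D z z' : (sig D z <= sig D z' + (cn (z - z'))%:E)%E.
Proof.
rewrite -leeBlDr //; apply: le_ereal_inf_tmp => y [g [w [Dg gn adj ->]]].
rewrite leeBlDr // -EFinD.
case: (adj) => hg hw _.
apply: (@le_trans _ _ (nrm (fsub w (fscale z g)) / nrm g)%:E).
  by apply: ereal_inf_lbound; exists g, w; split.
by rewrite lee_fin; apply: ratio_lip => //; apply: nrm_pos.
Qed.

Lemma sig_sub (D1 D2 : set fn) z : (forall g, D1 g -> H g -> D2 g) -> (sig D2 z <= sig D1 z)%E.
Proof.
move=> sD; apply: le_ereal_inf_tmp => y [g [w [Dg gn adj ->]]].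
apply: ereal_inf_lbound; exists g, w; split => //; apply: (sD _ Dg).
by case: adj.
Qed.

Lemma sig_ge0 D z : (0 <= sig D z)%E.
Proof.
apply: le_ereal_inf_tmp => y [g [w [Dg gn adj ->]]].
by rewrite lee_fin divr_ge0 // nrm_ge0.
Qed.

Lemma kspanS N g : kspan kf x N g -> kspan kf x N.+1 g.
Proof.
case=> c ->; exists (fun j => if (j < N)%N then c j else 0).
apply/funext => y; rewrite big_ord_recr /= ltnn mul0r addr0.
by apply: eq_bigr => j _; rewrite ltn_ord.
Qed.

Lemma kspan_le M N g : (M <= N)%N -> kspan kf x M g -> kspan kf x N g.
Proof.
move=> /subnK <-; elim: (N - M)%N => // k IH /IH; rewrite addSn; exact: kspanS.
Qed.

Lemma nrm_fzero : nrm fzero = 0.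
Proof. by rewrite /hnorm (ip0 H0); exact: sqrtr0. Qed.

Lemma conv_aux (s v : nat -> fn) g w z :
  (forall n, H (s n) /\ H (v n)) -> H g -> H w ->
  (fun n => nrm (fsub (s n) g)) @ \oo --> (0 : R) ->
  (fun n => nrm (fsub (v n) w)) @ \oo --> (0 : R) ->
  (fun n => nrm (fsub (v n) (fscale z (s n)))) @ \oo --> nrm (fsub w (fscale z g)).
Proof.
move=> hsv hg hw cs cv; apply/cvgrPdist_lt => eps eps0.
have cz := cn_ge0 z.
pose eta := eps / (cn z + 2).
have eta0 : 0 < eta by rewrite divr_gt0 // ltr_wpDl.
have etaE : eps = eta * (cn z + 2) by rewrite /eta divfK // gt_eqF // ltr_wpDl.
have h1 : \forall n \near \oo, nrm (fsub (s n) g) < eta.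
  have := (cvgrPdist_lt (FF:=eventually_filter) _ _).1 cs eta eta0; apply: filterS => n.
  by rewrite sub0r normrN ger0_norm // nrm_ge0.
have h2 : \forall n \near \oo, nrm (fsub (v n) w) < eta.
  have := (cvgrPdist_lt (FF:=eventually_filter) _ _).1 cv eta eta0; apply: filterS => n.
  by rewrite sub0r normrN ger0_norm // nrm_ge0.
near=> n.
have q1 : nrm (fsub (s n) g) < eta by near: n; exact: h1.
have q2 : nrm (fsub (v n) w) < eta by near: n; exact: h2.
have [hs hv] := hsv n.
have t1 := nrm_diff (Hsub hv (Hscale z hs)) (Hsub hw (Hscale z hg)).
have e : forall y, fsub (fsub (v n) (fscale z (s n))) (fsub w (fscale z g)) y =
   fsub (v n) w y + fscale (- z) (fsub (s n) g) y.
  by move=> y; rewrite /fsub /fscale; ring.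
have := @nrm_tri _ _ _ (Hsub hv hw) (Hscale (- z) (Hsub hs hg)) e.
rewrite (@nrm_scale (- z) (fsub (s n) g) _ (Hsub hs hg) (fun y => erefl)) cnN => t2.
have : cn z * nrm (fsub (s n) g) <= cn z * eta by rewrite ler_wpM2l // ltW.
rewrite distrC; nra.
Unshelve. all: by end_near.
Qed.

Lemma pointwise z e : 0 < e -> is_core H ip (adj_graph H ip F) (kspan_all kf x) ->
  exists M, forall N, (M <= N)%N -> (sig (kspan kf x N) z <= sig H z + e%:E)%E.
Proof.
move=> e0 hcore.
case E: (sig H z) => [r||]; last first.
- by have := sig_ge0 H z; rewrite E.
- by exists 0%N => N _; rewrite addye ?leey.
have e20 : 0 < e / 2 by rewrite divr_gt0.
have fin : sig H z \is a fin_num by rewrite E.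
have [y [g [w [Dg gn adj ->]]]] := lb_ereal_inf_adherent e20 fin.
rewrite -/(sig H z) E -EFinD lte_fin => yr.
have [_ [_ [sq [vq [hsv [cs cv]]]]]] := (hcore.2 g w).1 adj.
case: (adj) => hg hw _.
have hsv' : forall n, H (sq n) /\ H (vq n).
  by move=> n; have [_ [? ? _]] := hsv n.
have ca := conv_aux (z:=z) hsv' hg hw cs cv.
have cb : (fun n => nrm (sq n)) @ \oo --> nrm g.
  apply/cvgrPdist_lt => eps eps0.
  have := (cvgrPdist_lt (FF:=eventually_filter) _ _).1 cs eps eps0; apply: filterS => n.
  rewrite sub0r normrN ger0_norm ?nrm_ge0 // distrC; apply: le_lt_trans.
  by apply: nrm_diff => //; case: (hsv' n).
have gp := nrm_pos hg gn.
have cr : (fun n => nrm (fsub (vq n) (fscale z (sq n))) / nrm (sq n)) @ \oo -->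
   nrm (fsub w (fscale z g)) / nrm g.
  by apply: cvgM => //; apply: cvgV => //; rewrite gt_eqF.
have n1 : \forall n \near \oo, nrm (fsub (vq n) (fscale z (sq n))) / nrm (sq n) <
   nrm (fsub w (fscale z g)) / nrm g + e / 2.
  by apply: (cvgr_lt (FF:=eventually_filter) _ cr); rewrite ltrDl.
have n2 : \forall n \near \oo, 0 < nrm (sq n) by apply: (cvgr_gt (FF:=eventually_filter) _ cb).
have [N0 _ hN] := filterI n1 n2.
have [q1 q2] := hN N0 (leqnn N0).
have [[M hM] adjn] := hsv N0.
have [hsn hvn] := hsv' N0.
exists M => N hMN.
apply: (@le_trans _ _ (nrm (fsub (vq N0) (fscale z (sq N0))) / nrm (sq N0))%:E).
  apply: ereal_inf_lbound; exists (sq N0), (vq N0); split => //.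
    exact: kspan_le hM.
  by move=> e'; move: q2; rewrite e' nrm_fzero ltxx.
rewrite -EFinD lee_fin; lra.
Qed.

End S.

Theorem mainTheorem2 (R : realType) (X : Type) (H : set (X -> R[i]))
  (ip : (X -> R[i]) -> (X -> R[i]) -> R[i]) (kf : X -> X -> R[i])
  (F : X -> X) (x : nat -> X) :
  is_RKHS H ip kf ->
  densely_defined H ip F ->
  is_core H ip (adj_graph H ip F) (kspan_all kf x) ->
  (forall (z : R[i]) (N : nat),
     (sigma_inf_on H ip F (kspan kf x N.+1) z <=
      sigma_inf_on H ip F (kspan kf x N) z)%E) /\
  (forall A : set R[i], compact A ->
     forall e : R, 0 < e -> exists N0 : nat, forall N : nat, (N0 <= N)%N ->
       forall z : R[i], A z ->
         (sigma_inf_on H ip F (kspan kf x N) z - e%:E <= sigma_inf_on H ip F H z)%E /\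
         (sigma_inf_on H ip F H z <= sigma_inf_on H ip F (kspan kf x N) z + e%:E)%E).
Proof.
move=> hR _ hcore; split.
  by move=> z N; apply: sig_sub => g /kspanS.
move=> A cA e e0.
have e30 : 0 < e / 3 by rewrite divr_gt0.
have : \forall N \near \oo, A `<=` (fun z => (sigma_inf_on H ip F (kspan kf x N) z - e%:E <= sigma_inf_on H ip F H z)%E).
  apply: ((compact_near_coveringP A).1 cA nat \oo (fun N z => (sigma_inf_on H ip F (kspan kf x N) z - e%:E <= sigma_inf_on H ip F H z)%E) _) => z0 Az0.
  have [M hM] := pointwise hR z0 e30 hcore.
  near=> z N.
  have dz : cn (z0 - z) < e / 3 by near: z; exact: near_cn.
  have hMN : (M <= N)%N by near: N; exists M.
  have h1 := sig_lip hR F (kspan kf x N) z z0.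
  have h2 := hM N hMN.
  have h3 := sig_lip hR F H z0 z.
  rewrite -opprB cnN in h1.
  rewrite leeBlDr //.
  apply: (le_trans h1); apply: (le_trans (leeD2r _ (le_trans h2 (leeD2r _ h3)))).
  rewrite -!addeA -!EFinD leeD2l // lee_fin; lra.
case=> N0 _ hN; exists N0 => N hN0 z Az; split; first exact: hN.
apply: (le_trans (@sig_sub _ _ H ip F (kspan kf x N) H z (fun g _ hg => hg))).
by apply: leeDl; rewrite lee_fin ltW.
Unshelve. all: by end_near.
Qed.
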